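(* Let $q$ be a prime power, $\mathbb{L}=\mathrm{GF}(q^m)$, $n\mid q^m-1$, and $F_n=\{f\in\mathbb{L}^n : f_{qi\bmod n}=f_i^q\ \forall i\in\mathbb{Z}/n\mathbb{Z}\}$. Let $B_m(n)$ be the number of $q$-cyclotomic classes modulo $n$ having length $m$. Then the covering radius of $F_n\subseteq\mathbb{L}^n$ in the symbol Hamming metric is $$\rho(F_n)=n-B_m(n).$$ For $n=q^m-1$, $B_m(n)=\frac1m\sum_{r\mid m}\mu(m/r)(q^r-1)$.
   Context: The symbol Hamming distance between $x,y\in\mathbb{L}^n$ is $|\{i : x_i\ne y_i\}|$; the covering radius of a code $\mathcal{C}\subseteq\mathbb{L}^n$ is $\max_{x\in\mathbb{L}^n}\min_{c\in\mathcal{C}}d(x,c)$. The $q$-cyclotomic class of $s\in\mathbb{Z}/n\mathbb{Z}$ is $\{s,qs,q^2s,\ldots\}\bmod n$. $\mu$ is the Möbius function. *)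

(* Defs.v *)
From HB Require Import structures.
From mathcomp Require Import all_boot all_order all_algebra all_field.
Set Implicit Arguments. Unset Strict Implicit. Unset Printing Implicit Defensive.
Import Order.TTheory GRing.Theory Num.Theory.

(* Moebius function: mu(0) := 0 (unused); mu(n) = (-1)^(#primes) if n is
   squarefree, 0 otherwise. *)
Definition mobius (n : nat) : int :=
  if n == 0%N then 0%R
  else if all (fun p => logn p n == 1%N) (primes n)
       then ((-1) ^+ size (primes n))%R else 0%R.

Definition hamming (L : finType) (n : nat) (x y : {ffun 'I_n -> L}) : nat :=
  #|[set i : 'I_n | x i != y i]|.

(* Covering radius: max_x min_{c in C} d(x,c).  The min is computed with
   default value n (>= every Hamming distance), so it is the true minimum
   whenever C is nonempty. *)
Definition covering_radius (L : finType) (n : nat) (C : {set {ffun 'I_n -> L}}) : nat :=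
  \max_(x : {ffun 'I_n -> L}) \big[minn/n]_(c in C) hamming x c.

Definition Fcode (L : finFieldType) (q n : nat) : {set {ffun 'I_n -> L}} :=
  [set f : {ffun 'I_n -> L} |
    [forall i : 'I_n, forall j : 'I_n,
       (nat_of_ord j == (q * i) %% n)%N ==> (f j == f i ^+ q)%R]].

(* q-cyclotomic class of s mod n: { s q^k mod n : k >= 0 }.  Exponents
   k < n suffice, since the forward orbit of a map on n points is reached
   within its first n iterates. *)
Definition cyclo_class (q n : nat) (s : 'I_n) : {set 'I_n} :=
  [set i : 'I_n | [exists k : 'I_n, nat_of_ord i == (s * q ^ k) %% n]].

Definition Bm (q m n : nat) : nat :=
  #|[set C in [set cyclo_class q s | s : 'I_n] | #|C| == m]|.

(* Main.v *)
Require Import Defs.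
From HB Require Import structures.
From mathcomp Require Import all_boot all_order all_algebra all_field.
From mathcomp Require Import all_fingroup all_solvable.
From mathcomp Require Import zify.
Import Order.TTheory GRing.Theory Num.Theory.

Lemma mobius1 : mobius 1 = 1%R.
Proof. by []. Qed.

Lemma mobius_pM p e : prime p -> (0 < e)%N -> ~~ (p %| e)%N ->
  mobius (p * e) = (- mobius e)%R.
Proof.
move=> pp e0 npe.
have pe0 : (0 < p * e)%N by rewrite muln_gt0 prime_gt0.
have hperm : perm_eq (primes (p * e)) (p :: primes e).
  apply: uniq_perm; first exact: primes_uniq.
    rewrite /= primes_uniq andbT mem_primes; by rewrite (negbTE npe) !andbF.
  move=> r; rewrite (primesM _ (prime_gt0 pp) e0) primes_prime // !inE.
  by [].
rewrite /mobius (negbTE (lt0n_neq0 pe0)) (negbTE (lt0n_neq0 e0)).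
rewrite (perm_size hperm) (perm_all _ hperm) /=.
rewrite (lognM _ (prime_gt0 pp) e0) logn_prime // eqxx logn_coprime; last first.
  by rewrite prime_coprime.
rewrite (@eq_in_all _ _ (fun r => logn r e == 1%N)); last first.
  move=> r; rewrite mem_primes => /and3P[pr _ rd] /=.
  rewrite (lognM _ (prime_gt0 pp) e0) logn_prime //.
  have rp : (r == p) = false by apply/negbTE; apply: contraNneq npe => <-.
  by rewrite rp.
by case: all; rewrite ?oppr0 // exprS mulN1r.
Qed.

Lemma mobius_pM0 p e : prime p -> (0 < e)%N -> (p %| e)%N ->
  mobius (p * e) = 0%R.
Proof.
move=> pp e0 pe.
have pe0 : (0 < p * e)%N by rewrite muln_gt0 prime_gt0.
rewrite /mobius (negbTE (lt0n_neq0 pe0)).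
have -> : all (fun r => logn r (p * e) == 1%N) (primes (p * e)) = false.
  apply/negbTE/allPn; exists p.
    by rewrite mem_primes pp pe0 dvdn_mulr.
  rewrite (lognM _ (prime_gt0 pp) e0) logn_prime // eqxx.
  have : (0 < logn p e)%N by rewrite logn_gt0 mem_primes pp e0 pe.
  by case: (logn p e).
by [].
Qed.

Lemma memdiv m d : (0 < m)%N -> (d \in divisors m) = (d %| m)%N.
Proof. by move=> m0; rewrite -dvdn_divisors. Qed.
Arguments memdiv {m d}.

Lemma divisors1 : divisors 1 = [:: 1%N].
Proof. by []. Qed.

Lemma mobius_sum k : (0 < k)%N ->
  (\sum_(e <- divisors k) mobius e = (k == 1%N)%:R)%R.
Proof.
move=> k0; have [->|k1] := eqVneq k 1%N; first by rewrite divisors1 big_seq1.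
have kgt1 : (1 < k)%N by lia.
have pp : prime (pdiv k) := pdiv_prime kgt1.
have pk : (pdiv k %| k)%N := pdiv_dvd k.
move: (pdiv k) pp pk => p pp pk.
have [k' kk] : exists k', k = (p * k')%N by case/dvdnP: pk => x ->; exists x; rewrite mulnC.
have k'0 : (0 < k')%N by move: k0; rewrite kk muln_gt0 => /andP[].
rewrite (bigID (fun e => p %| e)%N) /=.
have E1 : perm_eq [seq e <- divisors k | (p %| e)%N] [seq (p * e)%N | e <- divisors k'].
  apply: uniq_perm; first by rewrite filter_uniq ?divisors_uniq.
    rewrite map_inj_in_uniq ?divisors_uniq //.
    by move=> x y _ _ /eqP; rewrite eqn_pmul2l ?prime_gt0 // => /eqP.
  move=> e; rewrite mem_filter (memdiv k0).
  apply/andP/mapP => [[pe ek]|[e' e'in ->]].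
    exists (e %/ p)%N; last by rewrite mulnC divnK.
    rewrite (memdiv k'0).
    move: ek; rewrite kk -{1}(divnK pe) mulnC dvdn_pmul2l // prime_gt0 //.
  move: e'in; rewrite (memdiv k'0) => e'k.
  by rewrite dvdn_mulr // kk dvdn_pmul2l // prime_gt0.
have E2 : perm_eq [seq e <- divisors k | ~~ (p %| e)%N] [seq e <- divisors k' | ~~ (p %| e)%N].
  apply: uniq_perm; rewrite ?filter_uniq ?divisors_uniq //.
  move=> e; rewrite !mem_filter (memdiv k0) (memdiv k'0).
  apply: andb_id2l => npe; rewrite kk Gauss_dvdr //.
  by rewrite coprime_sym prime_coprime.
have S1 : (\sum_(e <- divisors k | (p %| e)%N) mobius e = \sum_(e <- divisors k') mobius (p * e))%R.
  by rewrite -big_filter (perm_big _ E1) big_map.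
have S2 : (\sum_(e <- divisors k | ~~ (p %| e)%N) mobius e = \sum_(e <- divisors k' | ~~ (p %| e)%N) mobius e)%R.
  by rewrite -big_filter (perm_big _ E2) big_filter.
rewrite S1 S2 (bigID (fun e => p %| e)%N) /= big_seq_cond big1; last first.
  move=> e /andP[ed pe]; apply: mobius_pM0 => //.
  by move: ed; rewrite (memdiv k'0); apply: dvdn_gt0 k'0.
rewrite add0r -big_split /= big_seq_cond big1 ?(negbTE k1) //.
move=> e /andP[ed pe]; rewrite mobius_pM ?addNr //.
by move: ed; rewrite (memdiv k'0); apply: dvdn_gt0.
Qed.

Lemma divisors_sub m r : (0 < m)%N -> (r %| m)%N ->
  perm_eq (divisors r) [seq d <- divisors m | (d %| r)%N].
Proof.
move=> m0 rm; have r0 : (0 < r)%N by apply: dvdn_gt0 rm.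
apply: uniq_perm; rewrite ?filter_uniq ?divisors_uniq //.
move=> d; rewrite mem_filter (memdiv m0) (memdiv r0).
by apply/idP/andP => [dr|[]//]; split=> //; apply: dvdn_trans rm.
Qed.

Lemma divKd m d : (0 < m)%N -> (d %| m)%N -> (m %/ (m %/ d))%N = d.
Proof.
move=> m0 dm; have d0 : (0 < d)%N by apply: dvdn_gt0 dm.
have q0 : (0 < m %/ d)%N by rewrite divn_gt0 // dvdn_leq.
by rewrite -{1}(divnK dm) mulnC mulnK.
Qed.
Arguments divKd {m d}.

Lemma inner_sum m d : (0 < m)%N -> (d %| m)%N ->
  (\sum_(r <- divisors m | (d %| r)%N) mobius (m %/ r) = (d == m)%:R :> int)%R.
Proof.
move=> m0 dm; have d0 : (0 < d)%N by apply: dvdn_gt0 dm.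
have md0 : (0 < m %/ d)%N by rewrite divn_gt0 // dvdn_leq.
have E : perm_eq [seq m %/ r | r <- [seq r <- divisors m | (d %| r)%N]]%N (divisors (m %/ d)).
  apply: uniq_perm; rewrite ?divisors_uniq //.
    rewrite map_inj_in_uniq ?filter_uniq ?divisors_uniq //.
    move=> x y; rewrite !mem_filter !(memdiv m0) => /andP[_ xm] /andP[_ ym] exy.
    by rewrite -(divKd m0 xm) exy divKd.
  move=> e; rewrite (memdiv md0); apply/mapP/idP => [[r]|].
    rewrite mem_filter (memdiv m0) => /andP[dr rm] ->.
    case/dvdnP: dr => t rt; case/dvdnP: rm => u mu.
    have u0 : (0 < u)%N by move: m0; rewrite mu muln_gt0 => /andP[].
    have r0 : (0 < r)%N by move: m0; rewrite mu muln_gt0 => /andP[].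
    rewrite mu mulnK // rt mulnA mulnK //.
    exact: dvdn_mulr.
  case/dvdnP=> t mdt.
  have mdd : m = (t * e * d)%N by rewrite -mdt divnK.
  have t0 : (0 < t)%N by move: m0; rewrite mdd !muln_gt0 => /andP[/andP[]].
  have e0 : (0 < e)%N by move: m0; rewrite mdd !muln_gt0 => /andP[/andP[]].
  exists (t * d)%N.
    by rewrite mem_filter (memdiv m0) dvdn_mull //= mdd mulnAC dvdn_mulr.
  by rewrite mdd mulnAC mulKn // muln_gt0 t0 d0.
rewrite -big_filter -(big_map (fun r => m %/ r)%N xpredT) (perm_big _ E).
rewrite mobius_sum //.
have -> : (m %/ d == 1)%N = (d == m).
  apply/eqP/eqP => [h|->]; last by rewrite divnn m0.
  by rewrite -(divnK dm) h mul1n.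
by [].
Qed.

Lemma mobius_inv (g : nat -> int) m : (0 < m)%N ->
  (\sum_(r <- divisors m) mobius (m %/ r) * (\sum_(d <- divisors r) g d) = g m)%R.
Proof.
move=> m0.
transitivity (\sum_(r <- divisors m) \sum_(d <- divisors m)
   (if (d %| r)%N then mobius (m %/ r) * g d else 0))%R.
  apply: eq_big_seq => r; rewrite (memdiv m0) => rm.
  rewrite (perm_big _ (divisors_sub _ _ m0 rm)) big_filter big_mkcond mulr_sumr.
  by apply: eq_bigr => d _; case: ifP; rewrite ?mulr0.
rewrite exchange_big /=.
transitivity (\sum_(d <- divisors m)
   (\sum_(r <- divisors m | (d %| r)%N) mobius (m %/ r)) * g d)%R.
  apply: eq_bigr => d _; rewrite mulr_suml [RHS]big_mkcond.
  by apply: eq_bigr => r _; case: ifP; rewrite ?mul0r.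
rewrite (bigD1_seq m) ?divisors_uniq ?(memdiv m0) //= inner_sum // eqxx mul1r.
rewrite big_seq_cond big1 ?addr0 //.
move=> d /andP[dm dnm]; rewrite inner_sum ?(negbTE dnm) ?mul0r //.
by rewrite -(memdiv m0).
Qed.

Lemma bigmin_le (T : finType) (P : pred T) (F : T -> nat) d c0 : P c0 ->
  (\big[minn/d]_(c | P c) F c <= F c0)%N.
Proof.
move=> Pc0; rewrite -big_filter.
have : c0 \in [seq c <- index_enum T | P c] by rewrite mem_filter Pc0 mem_index_enum.
elim: [seq c <- index_enum T | P c] => [|y s IH] //.
rewrite big_cons inE => /predU1P [->|/IH h]; first exact: geq_minl.
exact: leq_trans (geq_minr _ _) h.
Qed.

Lemma dvd_sub1 x k : (0 < x)%N -> (x - 1 %| x ^ k - 1)%N.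
Proof.
move=> x0; elim: k => [|k IH]; first by rewrite expn0 subnn dvdn0.
have X0 : (0 < x ^ k)%N by rewrite expn_gt0 x0.
have e : (x ^ k.+1 - 1 = (x ^ k - 1) * x + (x - 1))%N.
  rewrite expnSr; move: (x ^ k) X0 => X X0. rewrite mulnBl mul1n addnBA // subnK //.
  by rewrite leq_pmull.
by rewrite e dvdn_add // dvdn_mulr.
Qed.

Section Sig.
Variables (q m n : nat).
Hypotheses (hq1 : (1 < q)%N) (hm : (0 < m)%N) (hn : (n %| q ^ m - 1)%N).

Definition sig (i : 'I_n) : 'I_n :=
  Ordinal (ltn_pmod (q * i) (leq_ltn_trans (leq0n i) (ltn_ord i))).

Lemma iter_sig k i : val (iter k sig i) = (i * q ^ k) %% n.
Proof.
elim: k => [|k IH] /=; first by rewrite expn0 muln1 modn_small.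
by rewrite IH modnMmr expnS mulnCA.
Qed.

Lemma iter_m i : iter m sig i = i.
Proof.
apply: val_inj; rewrite iter_sig.
have qm : (0 < q ^ m)%N by rewrite expn_gt0; lia.
case/dvdnP: hn => c hc.
rewrite -(subnK qm) hc addn1 mulnS mulnA addnC modnMDl.
by rewrite modn_small.
Qed.

Lemma sig_inj : injective sig.
Proof.
apply: (can_inj (g := iter m.-1 sig)) => i.
by rewrite -iterSr prednK // iter_m.
Qed.

Let fsym := fconnect_sym sig_inj.

Lemma cyclo_classE s : cyclo_class q s = [set y | fconnect sig s y].
Proof.
apply/setP => y; rewrite !inE; apply/existsP/idP => [[k /eqP hk]|hy].
  have -> : y = iter k sig s by apply: val_inj; rewrite iter_sig.
  exact: fconnect_iter.
have hk : (findex sig s y < n)%N.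
  apply: leq_trans (findex_max hy) _.
  by apply: leq_trans (max_card _) _; rewrite card_ord.
exists (Ordinal hk) => /=; rewrite -iter_sig iter_findex //.
Qed.

Lemma card_class s : #|cyclo_class q s| = fingraph.order sig s.
Proof. by rewrite cyclo_classE cardsE. Qed.

Lemma iter_mul c i : iter (c * fingraph.order sig i) sig i = i.
Proof.
elim: c => [|c IH] //; by rewrite mulSn iterD IH (iter_order sig_inj).
Qed.

Lemma iter_mod k i : iter k sig i = iter (k %% fingraph.order sig i) sig i.
Proof. by rewrite {1}(divn_eq k (fingraph.order sig i)) addnC iterD iter_mul. Qed.

Lemma iter_eq_mod a b i : iter a sig i = iter b sig i ->
  a %% fingraph.order sig i = b %% fingraph.order sig i.
Proof.
rewrite (iter_mod a) (iter_mod b) => h.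
rewrite -(findex_iter (ltn_pmod a (fingraph.order_gt0 sig i))).
by rewrite h findex_iter // ltn_pmod.
Qed.

Lemma order_dvd k i : (fingraph.order sig i %| k)%N = (iter k sig i == i).
Proof.
apply/idP/eqP => [/dvdnP[c ->]|h]; first exact: iter_mul.
have := @iter_eq_mod k 0 i h; rewrite mod0n => /eqP.
by [].
Qed.

Lemma order_le_m i : (fingraph.order sig i <= m)%N.
Proof. by apply: dvdn_leq hm _; rewrite order_dvd iter_m. Qed.

Lemma order_sig i : fingraph.order sig (sig i) = fingraph.order sig i.
Proof. by rewrite /fingraph.order; apply/esym/eq_card; apply: same_fconnect1 sig_inj i. Qed.


Lemma froot_sig i : froot sig (sig i) = froot sig i.
Proof. by apply/(fingraph.rootP fsym); rewrite fsym fconnect1. Qed.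

Lemma order_conn x y : fconnect sig x y -> fingraph.order sig x = fingraph.order sig y.
Proof. by move=> h; apply: eq_card => z; rewrite /in_mem /= (same_connect fsym h). Qed.

Definition Rset := [set r | froots sig r && (fingraph.order sig r == m)].

Lemma class_root s : cyclo_class q (froot sig s) = cyclo_class q s.
Proof.
rewrite !cyclo_classE; apply/setP => y; rewrite !inE.
by apply/esym/(same_connect fsym); apply: connect_root.
Qed.

Lemma Bm_roots : Bm q m n = #|Rset|.
Proof.
rewrite /Bm.
have -> : [set C in [set cyclo_class q s | s : 'I_n] | #|C| == m] =
          (@cyclo_class q n) @: Rset.
  apply/setP => C; rewrite !inE; apply/andP/imsetP.
    case=> /imsetP [s _ ->] hs; exists (froot sig s); last by rewrite class_root.
    by rewrite inE fingraph.roots_root // -card_class class_root.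
  case=> r; rewrite inE => /andP[_ /eqP ho] ->; split.
    exact: imset_f.
  by rewrite card_class ho.
rewrite card_in_imset // => r1 r2; rewrite !inE => /andP[/eqP h1 _] /andP[/eqP h2 _] e.
have : r2 \in cyclo_class q r1 by rewrite e cyclo_classE inE connect0.
by rewrite cyclo_classE inE => /(fingraph.rootP fsym); rewrite h1 h2.
Qed.


Variables (L : finFieldType).
Hypothesis hL : #|L| = (q ^ m)%N.

Lemma frob_m (y : L) : (y ^+ (q ^ m) = y)%R.
Proof. by rewrite -hL expf_card. Qed.

Lemma frob_mod (y : L) k : (y ^+ (q ^ k) = y ^+ (q ^ (k %% m)))%R.
Proof.
rewrite {1}(divn_eq k m); elim: (k %/ m) => [|c IH]; first by rewrite mul0n add0n.
by rewrite mulSn -addnA expnD exprM frob_m IH.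
Qed.

Lemma F_sig f : f \in Fcode L q n -> forall i, f (sig i) = (f i ^+ q)%R.
Proof.
rewrite inE => /forallP h i; have /forallP /(_ (sig i)) /implyP := h i.
by move=> /(_ (eqxx _)) /eqP.
Qed.

Lemma F_iter f : f \in Fcode L q n -> forall k i, f (iter k sig i) = (f i ^+ (q ^ k))%R.
Proof.
move=> hf; elim=> [|k IH] i; first by rewrite expn0 expr1.
by rewrite iterS (@F_sig f hf) IH -exprM expnSr.
Qed.

Definition primL (a : L) := (a != 0)%R /\ forall k, (a ^+ k = 1)%R -> (q ^ m - 1 %| k)%N.

Lemma prim_exists : exists a : L, primL a.
Proof.
have /cyclicP [u hu] := field_unit_group_cyclic [set: {unit L}]%G.
exists (val u); split; first by rewrite -unitfE; exact: valP.
move=> k hk.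
have hu1 : ((u ^+ k)%g = 1%g) by apply: val_inj; rewrite FinRing.val_unitX hk.
have : (#[u]%g %| k)%N by rewrite order_dvdn hu1.
by rewrite /order -hu /= (card_finField_unit L) hL subn1.
Qed.

Lemma no_fix a : primL a -> forall d, (0 < d < m)%N -> (a ^+ (q ^ d) != a)%R.
Proof.
move=> [a0 ha] d /andP[d0 dm]; apply/eqP => e.
have qd1 : (1 < q ^ d)%N by rewrite -(expn0 q) ltn_exp2l.
have qdm : (q ^ d < q ^ m)%N by rewrite ltn_exp2l.
have : (a ^+ (q ^ d - 1) = 1)%R.
  apply: (mulIf a0); rewrite mul1r -exprSr subn1 prednK; last by lia.
  exact: e.
move/ha/dvdn_leq; lia.
Qed.


Lemma lower a (pa : primL a) f : f \in Fcode L q n ->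
  (n - #|Rset| <= hamming [ffun => a] f)%N.
Proof.
move=> hf.
set A := [set i | f i == a].
have hA : forall i, i \in A -> fingraph.order sig i = m.
  move=> i; rewrite inE => /eqP fi.
  apply/eqP; rewrite eqn_leq order_le_m //=; rewrite leqNgt; apply/negP => lt.
  have := @no_fix a pa (fingraph.order sig i).
  rewrite fingraph.order_gt0 lt => /(_ isT); rewrite -fi -(@F_iter f hf).
  by rewrite (iter_order sig_inj) eqxx.
have hAR : #|A| <= #|Rset|.
  rewrite -(card_in_imset (f := froot sig)); last first.
    move=> i j iA jA e.
    have cij : fconnect sig i j by apply/(fingraph.rootP fsym).
    have ho := hA i iA.
    have := findex_max cij; rewrite ho => dlt.
    have := iter_findex cij => ej.
    move: iA jA; rewrite !inE => /eqP fi /eqP fj.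
    have : (f j = f i ^+ (q ^ findex sig i j))%R by rewrite -(@F_iter f hf) ej.
    rewrite fi fj; case: (posnP (findex sig i j)) => [z|pz].
      by rewrite -ej z.
    move=> ea; have := @no_fix a pa (findex sig i j); rewrite pz dlt => /(_ isT).
    by rewrite -ea eqxx.
  apply: subset_leq_card; apply/subsetP => r /imsetP [i iA ->].
  rewrite inE fingraph.roots_root //=.
  by rewrite -(@order_conn _ _ (connect_root _ i)) hA.
rewrite /hamming.
have -> : [set i | [ffun=> a] i != f i] = ~: A.
  by apply/setP => i; rewrite !inE ffunE eq_sym.
have := cardsC A; rewrite card_ord; lia.
Qed.


Definition fbest (x : {ffun 'I_n -> L}) : {ffun 'I_n -> L} :=
  [ffun i => if fingraph.order sig i == m
             then (x (froot sig i) ^+ (q ^ findex sig (froot sig i) i))%R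
             else 0%R].

Lemma fbest_in x : fbest x \in Fcode L q n.
Proof.
rewrite inE; apply/forallP => i; apply/forallP => j; apply/implyP => /eqP hj.
have -> : j = sig i by apply: val_inj.
rewrite !ffunE order_sig froot_sig.
case: ifP => ho; last by rewrite expr0n; have -> : (q == 0%N) = false by lia.
set r := froot sig i.
have hr : fconnect sig r i by rewrite fsym; apply: connect_root.
have e1 : iter (findex sig r i).+1 sig r = sig i by rewrite iterS iter_findex.
have hr' : fconnect sig r (sig i) by apply: connect_trans hr (fconnect1 _ _).
have e2 : iter (findex sig r (sig i)) sig r = sig i by rewrite iter_findex.
have := @iter_eq_mod _ _ r (etrans e2 (esym e1)).
rewrite (@order_conn _ _ hr) (eqP ho) => em.
by rewrite -exprM -expnSr frob_mod em -frob_mod.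
Qed.

Lemma upper x : (hamming x (fbest x) <= n - #|Rset|)%N.
Proof.
rewrite /hamming.
have : [set i | x i != fbest x i] \subset ~: Rset.
  apply/subsetP => i; rewrite !inE; apply: contraNN => /andP[/eqP ri ho].
  by rewrite ffunE ho ri findex0 expn0 expr1.
move/subset_leq_card; have := cardsC Rset; rewrite card_ord => h1 h2; apply: leq_trans h2 _; move: h1; move: #|Rset| #|~: Rset| => u v; lia.
Qed.


Lemma covering : covering_radius (Fcode L q n) = (n - Bm q m n)%N.
Proof.
rewrite Bm_roots /covering_radius.
have [a pa] := prim_exists.
apply/eqP; rewrite eqn_leq; apply/andP; split.
  apply/bigmax_leqP => x _.
  apply: leq_trans (upper x).
  by apply: bigmin_le; apply: fbest_in.
apply: leq_trans (leq_bigmax [ffun => a]).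
apply: (big_ind (fun y => n - #|Rset| <= y)%N).
- exact: leq_subr.
- by move=> u v hu hv; rewrite leq_min hu hv.
- by move=> c hc; apply: lower.
Qed.


Lemma card_order_set : #|order_set sig m| = (#|Rset| * m)%N.
Proof.
rewrite -(@fcard_order_set _ sig sig_inj m (order_set sig m)) //.
- by congr (_ * _)%N; rewrite /n_comp_mem cardsE; apply: eq_card => r; rewrite !inE.
- move=> x y /eqP <-; by rewrite !inE order_sig.
Qed.

Lemma sum_order_set r : (0 < r)%N ->
  (\sum_(d <- divisors r) #|order_set sig d| =
   #|[pred s | fingraph.order sig s %| r]|)%N.
Proof.
move=> r0.
transitivity (\sum_(d <- divisors r) \sum_s (fingraph.order sig s == d) : nat)%N.
  apply: eq_bigr => d _; rewrite -sum1_card big_mkcond /=.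
  by apply: eq_bigr => s _; rewrite inE; case: eqP.
rewrite exchange_big /= -sum1_card [RHS]big_mkcond /=; apply: eq_bigr => s _.
transitivity (\sum_(d <- divisors r | fingraph.order sig s == d) 1)%N.
  by rewrite [RHS]big_mkcond; apply: eq_bigr => d _; case: eqP.
rewrite sum1_count.
have -> : count (fun d => fingraph.order sig s == d) (divisors r) =
          count_mem (fingraph.order sig s) (divisors r).
  by apply: eq_count => d; rewrite /= eq_sym.
by rewrite count_uniq_mem ?divisors_uniq // (memdiv r0) inE; case: (_ %| _)%N.
Qed.


Lemma count_fix r : n = (q ^ m - 1)%N -> (r %| m)%N ->
  #|[pred s | fingraph.order sig s %| r]| = (q ^ r - 1)%N.
Proof.
move=> hN rm.
have r0 : (0 < r)%N by apply: dvdn_gt0 rm.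
have qr1 : (1 < q ^ r)%N by rewrite -(expn0 q) ltn_exp2l.
set Q := (q ^ r - 1)%N.
have Q0 : (0 < Q)%N by rewrite /Q; lia.
have [K hK] : exists K, n = (K * Q)%N.
  apply/dvdnP; rewrite hN -(divnK rm) mulnC expnM /Q.
  by apply: dvd_sub1; lia.
have n0 : (0 < n)%N by rewrite hN subn_gt0 -(expn0 q) ltn_exp2l.
have K0 : (0 < K)%N by move: n0; rewrite hK muln_gt0 => /andP[].
have key : forall s : 'I_n, (fingraph.order sig s %| r)%N = (K %| s)%N.
  move=> s; rewrite order_dvd -val_eqE iter_sig.
  rewrite -{1}(subnK (ltnW qr1)) -/Q addn1 mulnS addnC.
  rewrite -[X in _ == X](modn_small (ltn_ord s)) -[X in _ == X %% n]add0n eqn_modDr mod0n.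
  rewrite -/(dvdn n _); move: (val s) => v; by rewrite hK dvdn_pmul2r.
rewrite (eq_card (B := [pred s : 'I_n | K %| s]%N)); last by move=> s; rewrite !inE key.
have mk_lt : forall j : 'I_Q, (j * K < n)%N.
  by move=> j; rewrite hK mulnC ltn_pmul2l.
pose mk (j : 'I_Q) : 'I_n := Ordinal (mk_lt j).
have mk_inj : injective mk.
  by move=> j1 j2 /(congr1 val) /= /eqP; rewrite eqn_pmul2r // => /eqP /val_inj.
rewrite -[RHS](card_ord Q) -(card_imset [pred j | true] mk_inj).
apply: eq_card => s; rewrite !inE; apply/idP/imsetP => [Ks|[j _ ->]].
  have hj : (s %/ K < Q)%N by rewrite ltn_divLR // mulnC -hK.
  by exists (Ordinal hj) => //; apply: val_inj; rewrite /= divnK.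
by rewrite /= dvdn_mull.
Qed.

End Sig.

Theorem theorem10p3 (L : finFieldType) (q m : nat)
  (hq : exists p k : nat, [/\ prime p, (0 < k)%N & q = p ^ k])
  (hm : (0 < m)%N) (hL : #|L| = (q ^ m)%N) :
  (forall n : nat, (n %| q ^ m - 1)%N ->
     covering_radius (Fcode L q n) = (n - Bm q m n)%N)
  /\
  ((Bm q m (q ^ m - 1))%:R : rat) =
    ((m%:R)^-1 * \sum_(r <- divisors m)
                    (mobius (m %/ r))%:~R * ((q ^ r - 1)%N)%:R)%R.
Proof.
have hq1 : (1 < q)%N.
  case: hq => p [k [pp k0 ->]].
  by rewrite -(expn0 p) ltn_exp2l ?prime_gt1.
split; first by move=> n hn; apply: covering.
have hn := dvdnn (q ^ m - 1).
set N := (q ^ m - 1)%N.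
have hB : ((Bm q m N * m)%N : int) = (#|order_set (sig q N) m| : int).
  by rewrite (Bm_roots _ _ _ hq1 hm hn) (card_order_set _ _ _ hq1 hm hn).
have E : (\sum_(r <- divisors m) mobius (m %/ r) * ((q ^ r - 1)%N : int))%R
          = ((Bm q m N * m)%N : int).
  rewrite hB -(mobius_inv (fun d => (#|order_set (sig q N) d| : int)) m hm).
  apply: eq_big_seq => r rin; congr (_ * _)%R.
  have r0 : (0 < r)%N by move: rin; rewrite (memdiv hm); apply: dvdn_gt0.
  rewrite -(count_fix _ _ _ hq1 hm hn _ hL _ (erefl _)) -?(memdiv hm) //.
  rewrite -(sum_order_set q N r r0) -natz natr_sum.
  by apply: eq_bigr => d _; rewrite natz.
have E' := congr1 (fun z : int => (z%:~R : rat)) E; rewrite /= rmorph_sum /= in E'.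
rewrite (eq_bigr (fun r => ((mobius (m %/ r) * ((q ^ r - 1)%N : int))%:~R : rat))); last first.
  by move=> r _; rewrite rmorphM /= pmulrn.
rewrite E' (_ : (((Bm q m N * m)%N : int)%:~R : rat) = ((Bm q m N * m)%N)%:R)%R // natrM mulrCA mulVf ?mulr1 //.
by rewrite pnatr_eq0 -lt0n.
Qed.
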